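(* Let $k_1,k_2$ be integers with $1\le k_1$ and $1<k_2$. Then for lines $L_1,L_2$ the following are equivalent: (i) $L_1\perp L_2$; (ii) there are $X_1\in\mathcal H_{k_1}$, $X_2\in\mathcal H_{k_2}$ such that $X_1\perp_x X_2$ and $L_i\subset X_i$ for $i=1,2$.
   Context: Let $V$ be a vector space over a field with a nondegenerate symmetric bilinear form $\xi$ having no isotropic vectors. Points are elements of $V$; (affine) subspaces are sets $p+W$ with $W$ a linear subspace, of dimension $\dim W$; lines are the $1$-dimensional subspaces. $\mathcal H_k$ is the family of $k$-dimensional subspaces. For nonempty subspaces $X,Y$: $X\perp Y$ iff $\xi(b-a,d-c)=0$ for all $a,b\in X$, $c,d\in Y$ (for lines this is the usual orthogonality of directions); $X\perp_x Y$ iff $X\perp Y$ and $X\cap Y\neq\emptyset$.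
   Formalization: V also contains $k_1+k_2$ linearly independent vectors, so $\dim V\ge k_1+k_2$. The statement above fails without it. *)

(* Defs.v *)
From mathcomp Require Import all_boot all_algebra.
Set Implicit Arguments. Unset Strict Implicit. Unset Printing Implicit Defensive.
Import GRing.Theory.
Local Open Scope ring_scope.

Section Geometry.
Variables (F : fieldType) (V : lmodType F) (xi : V -> V -> F).

Definition sym_bilin_form : Prop :=
  (forall a x y z, xi (a *: x + y) z = a * xi x z + xi y z) /\
  (forall x y, xi x y = xi y x).

Definition nondegen_form : Prop :=
  forall x, (forall y, xi x y = 0) -> x = 0.

Definition anisotropic_form : Prop :=
  forall x, xi x x = 0 -> x = 0.

Definition lin_indep (k : nat) (b : 'I_k -> V) : Prop :=
  forall c : 'I_k -> F, \sum_(i < k) c i *: b i = 0 -> forall i, c i = 0.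

Definition in_H (k : nat) (X : V -> Prop) : Prop :=
  exists (p : V) (b : 'I_k -> V), lin_indep b /\
    forall x, X x <-> exists c : 'I_k -> F, x = p + \sum_(i < k) c i *: b i.

Definition is_line_sub (L : V -> Prop) : Prop := in_H 1 L.

Definition sub_pts (X Y : V -> Prop) : Prop := forall x, X x -> Y x.

Definition perp_sub (X Y : V -> Prop) : Prop :=
  forall a b c d, X a -> X b -> Y c -> Y d -> xi (b - a) (d - c) = 0.

Definition perp_x (X Y : V -> Prop) : Prop :=
  perp_sub X Y /\ exists z, X z /\ Y z.

End Geometry.

(* Main.v *)
Require Import Defs.
From mathcomp Require Import all_boot all_algebra zify.
Set Implicit Arguments. Unset Strict Implicit. Unset Printing Implicit Defensive.
Import GRing.Theory.
Local Open Scope ring_scope.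

Lemma xiD (F : fieldType) (V : lmodType F) (xi : V -> V -> F)
  (Hb : sym_bilin_form xi) x y z : xi (x + y) z = xi x z + xi y z.
Proof. by case: Hb => H _; have := H 1 x y z; rewrite scale1r mul1r. Qed.

Lemma xi0 (F : fieldType) (V : lmodType F) (xi : V -> V -> F)
  (Hb : sym_bilin_form xi) z : xi 0 z = 0.
Proof.
have H := xiD Hb 0 0 z; apply: (addrI (xi 0 z)).
by rewrite addr0 -H addr0.
Qed.

Lemma xiZ (F : fieldType) (V : lmodType F) (xi : V -> V -> F)
  (Hb : sym_bilin_form xi) a x z : xi (a *: x) z = a * xi x z.
Proof. have := Hb; case => H _; by rewrite -[a *: x]addr0 H xi0 // addr0. Qed.

Lemma xi_lin (F : fieldType) (V : lmodType F) (xi : V -> V -> F)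
  (Hb : sym_bilin_form xi) (I : Type) (r : seq I) (P : pred I) (c : I -> F) (e : I -> V) z :
  xi (\sum_(i <- r | P i) c i *: e i) z = \sum_(i <- r | P i) c i * xi (e i) z.
Proof.
rewrite (big_morph (fun x => xi x z) (id1 := 0) (op1 := +%R) (fun x y => xiD Hb x y z) (xi0 Hb z)).
by apply: eq_bigr => i _; rewrite xiZ.
Qed.

Lemma xiC (F : fieldType) (V : lmodType F) (xi : V -> V -> F)
  (Hb : sym_bilin_form xi) x y : xi x y = xi y x.
Proof. by case: Hb. Qed.

Lemma pairwise_ins (F : fieldType) (V : lmodType F) (xi : V -> V -> F)
  (Hb : sym_bilin_form xi) (a b : seq V) v :
  pairwise (fun x y => xi x y == 0) (a ++ b) ->
  all (fun x => xi v x == 0) (a ++ b) ->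
  pairwise (fun x y => xi x y == 0) (a ++ v :: b).
Proof.
elim: a => [|x a IH] /=; first by move=> -> ->.
move=> /andP[Hx Hp] /andP[Hvx Hv].
rewrite IH // andbT all_cat /=; rewrite all_cat in Hx.
case/andP: Hx => -> ->; by rewrite (xiC Hb x v) Hvx.
Qed.
Goal True. idtac. Abort.
Lemma exists_orth (F : fieldType) (V : lmodType F) (xi : V -> V -> F)
  (Hb : sym_bilin_form xi) n (b : 'I_n -> V) (Hli : lin_indep b) (s : seq V) :
  (size s < n)%N -> exists2 v, v != 0 & all (fun x => xi v x == 0) s.
Proof.
move=> Hs.
pose M : 'M[F]_(n, size s) := \matrix_(j, i) xi (b j) (s`_i).
have : kermx M != 0.
  rewrite -mxrank_eq0 mxrank_ker subn_eq0 -ltnNge.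
  exact: leq_ltn_trans (rank_leq_col M) Hs.
case/rowV0Pn => c /sub_kermxP Hc Hc0.
exists (\sum_j c 0 j *: b j).
  apply: contra Hc0 => /eqP H; apply/eqP/rowP => j; rewrite mxE.
  exact: Hli _ H j.
apply/allP => x /(nthP 0) [i Hi <-]; rewrite xi_lin //.
have := congr1 (fun A : 'M[F]_(1, size s) => A 0 (Ordinal Hi)) Hc; rewrite !mxE => H; apply/eqP; rewrite -[RHS]H.
by apply: eq_bigr => j _; rewrite mxE.
Qed.
Lemma extend (F : fieldType) (V : lmodType F) (xi : V -> V -> F)
  (Hb : sym_bilin_form xi) n (b : 'I_n -> V) (Hli : lin_indep b) (a c : seq V) m :
  pairwise (fun x y => xi x y == 0) (a ++ c) -> all (fun x => x != 0) (a ++ c) ->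
  (size a + size c + m <= n)%N ->
  exists t, [/\ size t = m, pairwise (fun x y => xi x y == 0) (a ++ t ++ c)
     & all (fun x => x != 0) (a ++ t ++ c)].
Proof.
move=> Hp Hnz; elim: m => [|m IH] Hs; first by exists [::].
have [t [St Pt Nt]] : exists t, [/\ size t = m, pairwise (fun x y => xi x y == 0) (a ++ t ++ c)
     & all (fun x => x != 0) (a ++ t ++ c)].
  by apply: IH; apply: leq_trans Hs; rewrite addnS.
have Hs' : (size (a ++ t ++ c) < n)%N.
  rewrite !size_cat St; lia.
have [v Hv0 Hv] := exists_orth Hb Hli Hs'.
exists (v :: t); split => /=; first by rewrite St.
  exact: pairwise_ins.
move: Nt; rewrite !all_cat /= !all_cat => /and3P[-> -> ->]; by rewrite Hv0.
Qed.
Lemma orth_nth (F : fieldType) (V : lmodType F) (xi : V -> V -> F)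
  (Hb : sym_bilin_form xi) (s : seq V) i j :
  pairwise (fun x y => xi x y == 0) s -> (i < size s)%N -> (j < size s)%N ->
  i != j -> xi s`_i s`_j = 0.
Proof.
move=> /(pairwiseP 0) Hp Hi Hj; case: ltngtP => // H _.
  by apply/eqP; apply: Hp.
by rewrite xiC //; apply/eqP; apply: Hp.
Qed.

Lemma orth_indep (F : fieldType) (V : lmodType F) (xi : V -> V -> F)
  (Hb : sym_bilin_form xi) (Hani : anisotropic_form xi) k (s : seq V) :
  size s = k -> pairwise (fun x y => xi x y == 0) s -> all (fun x => x != 0) s ->
  lin_indep (fun i : 'I_k => s`_i).
Proof.
move=> Hs Hp Hn c Hc j.
have : xi (\sum_i c i *: s`_i) s`_j = 0 by rewrite Hc xi0.
have Hj : (j < size s)%N by rewrite Hs.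
rewrite xi_lin // (bigD1 j) //= big1 ?addr0.
  move/eqP; rewrite mulf_eq0 => /orP[/eqP //|/eqP H].
  have := (allP Hn) _ (mem_nth 0 Hj); by rewrite (Hani _ H) eqxx.
move=> i Hij; rewrite (orth_nth Hb Hp) ?mulr0 //; first by rewrite Hs.
Qed.
Lemma xiB (F : fieldType) (V : lmodType F) (xi : V -> V -> F)
  (Hb : sym_bilin_form xi) x y z : xi (x - y) z = xi x z - xi y z.
Proof. by rewrite -scaleN1r xiD // xiZ // mulN1r. Qed.

Lemma span_first (F : fieldType) (V : lmodType F) k (u : V) (t : seq V) (p : V) (a : F) :
  exists c : 'I_k.+1 -> F, p + a *: u = p + \sum_i c i *: (u :: t)`_i.
Proof.
exists (fun i => if val i == 0%N then a else 0).
rewrite big_ord_recl /= big1 ?addr0 // => i _.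
  by rewrite scale0r.
Qed.

Lemma span_two (F : fieldType) (V : lmodType F) k (u w : V) (t : seq V) (p : V) (a b : F) :
  exists c : 'I_k.+2 -> F, p + (a *: u + b *: w) = p + \sum_i c i *: (u :: w :: t)`_i.
Proof.
exists (fun i => if val i == 0%N then a else if val i == 1%N then b else 0).
rewrite big_ord_recl /= big_ord_recl /= big1 ?addr0 // => i _.
by rewrite scale0r.
Qed.

Lemma line_dec (F : fieldType) (V : lmodType F) (L : V -> Prop) :
  is_line_sub L -> exists p u, u != 0 /\ forall x, L x <-> exists t, x = p + t *: u.
Proof.
case=> p [b [Hli HL]]; exists p, (b ord0); split.
  apply/eqP => H; have := Hli (fun _ => 1).
  rewrite big_ord1 H scaler0 => /(_ erefl ord0) /eqP; by rewrite oner_eq0.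
move=> x; rewrite HL; split => [[c ->]|[t ->]].
  by exists (c ord0); rewrite big_ord1.
by exists (fun _ => t); rewrite big_ord1.
Qed.

Lemma addKB (V : zmodType) (p x y : V) : p + x - (p + y) = x - y.
Proof. by rewrite opprD addrACA subrr add0r. Qed.
Theorem lemma2p3 (F : fieldType) (V : lmodType F) (xi : V -> V -> F)
  (Hbil : sym_bilin_form xi) (Hnd : nondegen_form xi)
  (Hani : anisotropic_form xi)
  (k1 k2 : nat) (Hk1 : (1 <= k1)%N) (Hk2 : (1 < k2)%N)
  (Hdim : exists b : 'I_(k1 + k2) -> V, lin_indep b)
  (L1 L2 : V -> Prop) (HL1 : is_line_sub L1) (HL2 : is_line_sub L2) :
  perp_sub xi L1 L2 <->
  exists X1 X2 : V -> Prop,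
    [/\ in_H k1 X1, in_H k2 X2, perp_x xi X1 X2, sub_pts L1 X1 & sub_pts L2 X2].
Proof.
split; last first.
  move=> [X1 [X2 [_ _ [HP _] S1 S2]]] a b c d ha hb hc hd.
  by apply: HP; auto.
move=> Hperp.
have [p1 [u1 [Hu1 E1]]] := line_dec HL1.
have [p2 [u2 [Hu2 E2]]] := line_dec HL2.
have Hu12 : xi u1 u2 = 0.
  have := Hperp p1 (p1 + u1) p2 (p2 + u2).
  rewrite [p1 + u1]addrC [p2 + u2]addrC !addrK; apply.
  - by apply/E1; exists 0; rewrite scale0r addr0.
  - by apply/E1; exists 1; rewrite scale1r addrC.
  - by apply/E2; exists 0; rewrite scale0r addr0.
  - by apply/E2; exists 1; rewrite scale1r addrC.
have Hu21 : xi u2 u1 = 0 by rewrite (xiC Hbil).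
have N1 : xi u1 u1 != 0 by apply: contra Hu1 => /eqP /Hani ->.
have N2 : xi u2 u2 != 0 by apply: contra Hu2 => /eqP /Hani ->.
case: Hdim => bb Hli.
have [d Ed] : {d | p2 = p1 + d} by exists (p2 - p1); rewrite addrC subrK.
set al := xi d u1 / xi u1 u1.
set be := xi d u2 / xi u2 u2.
set r := d - (al *: u1 + be *: u2).
have Hr1 : xi r u1 = 0.
  by rewrite (xiB Hbil) (xiD Hbil) !(xiZ Hbil) divfK // Hu21 mulr0 addr0 subrr.
have Hr2 : xi r u2 = 0.
  by rewrite (xiB Hbil) (xiD Hbil) !(xiZ Hbil) divfK // Hu12 mulr0 add0r subrr.
have Hd : d = al *: u1 + be *: u2 + r by rewrite addrC subrK.
have [r' [ga [Hr'0 Hr'1 Hr'2 Hd']]] : exists r' ga, [/\ r' != 0, xi r' u1 = 0,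
    xi r' u2 = 0 & d = al *: u1 + be *: u2 + ga *: r'].
  case: (eqVneq r 0) => Hr.
    have [|v Hv0 Hv] := exists_orth Hbil Hli (s := [:: u1; u2]).
      by rewrite /=; lia.
    move: Hv => /= /and3P[/eqP ? /eqP ? _].
    by exists v, 0; split => //; rewrite scale0r Hd Hr.
  by exists r, 1; split => //; rewrite scale1r.
have Hp2 : p2 = p1 + (al *: u1 + (be *: u2 + ga *: r')).
  by rewrite Ed Hd' !addrA.
case: k1 Hk1 bb Hli => [//|k1] _ bb Hli.
case: k2 Hk2 bb Hli => [//|[//|k2]] _ bb Hli.
have Q1 : pairwise (fun x y => xi x y == 0) ([:: u1] ++ [:: u2; r']).
  by rewrite /= Hu12 (xiC Hbil u1 r') Hr'1 (xiC Hbil u2 r') Hr'2 eqxx.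
have Q2 : all (fun x => x != 0) ([:: u1] ++ [:: u2; r']) by rewrite /= Hu1 Hu2 Hr'0.
have Q3 : (size [:: u1] + size [:: u2; r'] + k1 <= k1.+1 + k2.+2)%N by rewrite /=; lia.
have [t1 [St1 Pt1 Nt1]] := extend Hbil Hli Q1 Q2 Q3.
have Q4 : (size ([:: u1] ++ t1 ++ [:: u2; r']) + size ([::] : seq V) + k2 <= k1.+1 + k2.+2)%N.
  by rewrite !size_cat /= St1; lia.
have Pt1' : pairwise (fun x y => xi x y == 0) (([:: u1] ++ t1 ++ [:: u2; r']) ++ ([::] : seq V)) by rewrite cats0.
have Nt1' : all (fun x => x != 0) (([:: u1] ++ t1 ++ [:: u2; r']) ++ ([::] : seq V)) by rewrite cats0.
have [t2 [St2 Pt2 Nt2]] := extend Hbil Hli Pt1' Nt1' Q4.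
rewrite cats0 -!catA /= in Pt2 Nt2.
have Pt : pairwise (fun x y => xi x y == 0) ((u1 :: t1) ++ (u2 :: r' :: t2)) by [].
have Nt : all (fun x => x != 0) ((u1 :: t1) ++ (u2 :: r' :: t2)) by [].
move: Pt Nt; rewrite pairwise_cat all_cat => /and3P[Hx P1 P2] /andP[M1 M2].
set s1 := u1 :: t1; set s2 := u2 :: r' :: t2.
have Ss1 : size s1 = k1.+1 by rewrite /= St1.
have Ss2 : size s2 = k2.+2 by rewrite /= St2.
have cross : forall (c1 : 'I_k1.+1 -> F) (c2 : 'I_k2.+2 -> F),
    xi (\sum_i c1 i *: s1`_i) (\sum_j c2 j *: s2`_j) = 0.
  move=> c1 c2; rewrite (xi_lin Hbil); apply: big1 => i _.
  rewrite (xiC Hbil) (xi_lin Hbil) big1 ?mulr0 // => j _.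
  have Hi : (i < size s1)%N by rewrite Ss1.
  have Hj : (j < size s2)%N by rewrite Ss2.
  rewrite (xiC Hbil); have /eqP -> := (allrelP Hx) _ _ (mem_nth 0 Hi) (mem_nth 0 Hj).
  by rewrite mulr0.
exists (fun x => exists c : 'I_k1.+1 -> F, x = p1 + \sum_i c i *: s1`_i).
exists (fun x => exists c : 'I_k2.+2 -> F, x = p2 + \sum_i c i *: s2`_i).
split.
- exists p1, (fun i => s1`_i); split; [exact: (orth_indep Hbil Hani Ss1 P1 M1) | by move=> x; exact: iff_refl].
- exists p2, (fun i => s2`_i); split; [exact: (orth_indep Hbil Hani Ss2 P2 M2) | by move=> x; exact: iff_refl].
- split.
    move=> a b c e [ca ->] [cb ->] [cc ->] [ce ->].
    rewrite !addKB (xiB Hbil) (xiC Hbil _ (_ - _)) (xiB Hbil) (xiC Hbil _ (_ - _)) (xiB Hbil).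
    have cross2 : forall (c1 : 'I_k1.+1 -> F) (c2 : 'I_k2.+2 -> F),
      xi (\sum_j c2 j *: s2`_j) (\sum_i c1 i *: s1`_i) = 0.
      by move=> c1 c2; rewrite (xiC Hbil) cross.
    by rewrite !cross2 subrr.
  exists (p1 + al *: u1); split.
    exact: span_first.
  have [c Hc] := span_two k2 u2 r' t2 p2 (- be) (- ga).
  exists c; rewrite -Hc Hp2 !scaleNr -!addrA.
  by rewrite [ga *: r' + _]addrCA subrr addr0 subrr addr0.
- move=> x /E1 [t ->]; exact: span_first.
- move=> x /E2 [t ->]; exact: span_first.
Qed.
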